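(* Let $\Psi\in\mathcal{L}PSH^*(\mathbb{C}^n)$ be an indicator, let $\psi(t)=\Psi(e^{t_1},\ldots,e^{t_n})$, and suppose that $\psi^+=\max\{\psi,0\}$ is the supporting function of a lower set. Then \[ \inf\{\psi^+(t):\ t\in H_1\}=\inf\{\psi^+(t):\ t\in\Sigma_{\mathbf 1}\}. \]
   Context: $\mathcal{L}PSH^*(\mathbb{C}^n)$: plurisubharmonic functions $u$ on $\mathbb{C}^n$ with $\limsup_{|z|\to\infty}u(z)/\log|z|<\infty$ and $u(z)\to+\infty$ as $|z|\to\infty$. An indicator is a plurisubharmonic $\Psi$ with $\Psi(z)=\Psi(|z_1|,\ldots,|z_n|)$ and $\Psi(|z_1|^c,\ldots,|z_n|^c)=c\Psi(z)$ for all $c>0$. The supporting function of $\Gamma$ is $h_\Gamma(t)=\sup\{\langle a,t\rangle:a\in\Gamma\}$. A compact convex set $\Gamma\subset\overline{\mathbb{R}}_+^n$ (closed nonnegative orthant) is a lower set if $a\in\Gamma$ implies $b\in\Gamma$ for every $b$ with $0<b_k<a_k$ for all $k$. $H_1=\{t\in\mathbb{R}^n:\sum_kt_k=1\}$ and $\Sigma_{\mathbf 1}=\{b\in\overline{\mathbb{R}}_+^n:\sum_kb_k=1\}$. *)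

(* Defs.v *)
From HB Require Import structures.
From mathcomp Require Import all_boot all_order all_algebra.
From mathcomp Require Import all_classical all_reals all_analysis.
From mathcomp Require Import complex.
Set Implicit Arguments. Unset Strict Implicit. Unset Printing Implicit Defensive.
Import Order.TTheory GRing.Theory Num.Theory.
Import numFieldNormedType.Exports.
Local Open Scope classical_set_scope.
Local Open Scope ring_scope.
Local Open Scope ereal_scope.

Section Defs.
Variable R : realType.

Definition Cn (n : nat) := 'I_n -> R[i].

Definition cabs (x : R[i]) : R := Normc.normc x.

Definition cnorm (n : nat) (z : Cn n) : R :=
  Num.sqrt (\sum_(k < n) cabs (z k) ^+ 2)%R.

Definition expi (theta : R) : R[i] := Complex (cos theta) (sin theta).

Definition usc (n : nat) (u : Cn n -> \bar R) : Prop :=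
  forall (z : Cn n) (c : R), u z < c%:E ->
    exists2 d : R, (0 < d)%R &
      forall w : Cn n, (cnorm (fun k => w k - z k) < d)%R -> u w < c%:E.

Definition psh (n : nat) (u : Cn n -> \bar R) : Prop :=
  [/\ forall z, u z < +oo,
      usc u &
      forall a b : Cn n,
        u a <= ((2 * pi)^-1)%:E *
          \int[@lebesgue_measure R]_(theta in `[0%R, (2 * pi)%R])
             u (fun k => a k + expi theta * b k)%R].

Definition LPSHstar (n : nat) (u : Cn n -> \bar R) : Prop :=
  [/\ psh u,
      (exists C r0 : R, forall z : Cn n, (r0 < cnorm z)%R ->
          u z * ((ln (cnorm z))^-1)%:E <= C%:E) &
      (forall M : R, exists r0 : R, forall z : Cn n,
          (r0 < cnorm z)%R -> M%:E < u z)].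

Definition toC (x : R) : R[i] := Complex x 0%R.

Definition cabsv (n : nat) (z : Cn n) : Cn n := fun k => toC (cabs (z k)).

Definition indicator (n : nat) (Psi : Cn n -> \bar R) : Prop :=
  [/\ psh Psi,
      (forall z, Psi z = Psi (cabsv z)) &
      (forall (z : Cn n) (c : R), (0 < c)%R ->
         Psi (fun k => toC (cabs (z k) `^ c)%R) = c%:E * Psi z)].

Definition psi_of (n : nat) (Psi : Cn n -> \bar R) (t : 'rV[R]_n) : \bar R :=
  Psi (fun k => toC (expR (t ord0 k))).

Definition dotR (n : nat) (a t : 'rV[R]_n) : R := (\sum_(k < n) a ord0 k * t ord0 k)%R.

Definition supfun (n : nat) (G : set 'rV[R]_n) (t : 'rV[R]_n) : \bar R :=
  ereal_sup [set (dotR a t)%:E | a in G].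

Definition nonneg_orthant (n : nat) : set 'rV[R]_n :=
  [set a | forall k, (0 <= a ord0 k)%R].

Definition convex_set_of (n : nat) (G : set 'rV[R]_n) : Prop :=
  forall a b : 'rV[R]_n, G a -> G b -> forall l : R, (0 <= l <= 1)%R ->
    G (l *: a + (1 - l) *: b)%R.

Definition lower_set (n : nat) (G : set 'rV[R]_n) : Prop :=
  [/\ compact G, convex_set_of G, G `<=` @nonneg_orthant n &
      forall a b : 'rV[R]_n, G a -> (forall k, (0 < b ord0 k < a ord0 k)%R) -> G b].

Definition H1 (n : nat) : set 'rV[R]_n := [set t | (\sum_(k < n) t ord0 k)%R = 1%R].

Definition Sigma1 (n : nat) : set 'rV[R]_n := @nonneg_orthant n `&` @H1 n.

End Defs.
Arguments nonneg_orthant {R} n.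
Arguments H1 {R} n.
Arguments Sigma1 {R} n.

(* Main.v *)
Set Warnings "-all".
Require Import Defs.
From HB Require Import structures.
From mathcomp Require Import all_boot all_order all_algebra.
From mathcomp Require Import all_classical all_reals all_analysis.
From mathcomp Require Import complex.
From mathcomp Require Import lra.
Import Order.TTheory GRing.Theory Num.Theory.
Local Open Scope classical_set_scope.
Local Open Scope ring_scope.
Local Open Scope ereal_scope.

Lemma maxe_real (R : realType) (x : \bar R) : x < +oo ->
  exists r : R, (0 <= r)%R /\ maxe x 0 = r%:E.
Proof.
case: x => [x| |] //= _.
- exists (Num.max x 0)%R; split; first by rewrite le_max lexx orbT.
  by rewrite EFin_max.
- by exists 0%R; split => //; rewrite maxNye.
Qed.

Lemma cabs_toC2 (R : realType) (x : R) : (cabs (toC x) ^+ 2 = x ^+ 2)%R.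
Proof.
rewrite /cabs /toC /=. rewrite sqr_sqrtr; last by rewrite addr_ge0 // sqr_ge0.
by rewrite expr0n /= addr0.
Qed.

Lemma coord_ex (R : realType) (n : nat) (Psi : Cn R n -> \bar R) (G : set 'rV[R]_n) :
  (forall M : R, exists r0 : R, forall z : Cn R n,
          (r0 < cnorm z)%R -> M%:E < Psi z) ->
  (forall t, maxe (psi_of Psi t) 0 = supfun G t) ->
  forall k : 'I_n, exists a, G a /\ (0 < a ord0 k)%R.
Proof.
move=> Pgrow hG k.
have [r0 Hr0] := Pgrow 0%R.
set s := (`|r0| + 1)%R.
have s0 : (0 < s)%R by rewrite /s ltr_pwDr // normr_ge0.
pose t : 'rV[R]_n := \row_j (if j == k then s else 0%R).
have hpos : 0 < psi_of Psi t.
  apply: Hr0; rewrite /cnorm.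
  apply: (@lt_le_trans _ _ (expR s)).
    apply: (@le_lt_trans _ _ `|r0|%R); first exact: ler_norm.
    apply: (@lt_le_trans _ _ (1 + s)%R); last exact: expR_ge1Dx.
    rewrite /s; lra.
  rewrite -[X in (X <= _)%R](@ger0_norm _ (expR s)) ?expR_ge0 //.
  rewrite -sqrtr_sqr; apply: ler_wsqrtr.
  rewrite (bigD1 k) //= cabs_toC2 mxE eqxx lerDl.
  by apply: sumr_ge0 => i _; rewrite sqr_ge0.
have : 0 < supfun G t by rewrite -hG lt_max hpos.
move=> /ereal_sup_gt [y [a Ga <-]]; rewrite lte_fin => H.
exists a; split => //.
move: H; rewrite /dotR (bigD1 k) //= big1 ?addr0; last first.
  by move=> i /negbTE Hi; rewrite mxE Hi mulr0.
by rewrite mxE eqxx pmulr_lgt0.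
Qed.
Lemma pos_pt (R : realType) (n : nat) (G : set 'rV[R]_n) :
  convex_set_of G -> G `<=` nonneg_orthant n -> (exists a, G a) ->
  (forall k : 'I_n, exists a, G a /\ (0 < a ord0 k)%R) ->
  exists c, G c /\ forall k, (0 < c ord0 k)%R.
Proof.
move=> Gconv Gpos [a0 Ga0] Hk.
suff : forall m, (m <= n)%N -> exists c, G c /\ forall k : 'I_n, (k < m)%N -> (0 < c ord0 k)%R.
  by move=> /(_ n (leqnn n)) [c [Gc Hc]]; exists c; split => // k; apply: Hc.
elim=> [|m IH] Hm.
  by exists a0; split.
have [c [Gc Hc]] := IH (ltnW Hm).
have [a [Ga Ha]] := Hk (Ordinal Hm).
exists ((2^-1) *: c + (1 - 2^-1) *: a)%R; split.
  by apply: Gconv => //; apply/andP; split; lra.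
move=> k Hkm; rewrite !mxE.
have ck := Gpos _ Gc k; have ak := Gpos _ Ga k.
rewrite ltnS leq_eqVlt in Hkm; case/orP: Hkm => [/eqP Ek|Hk'].
  have -> : k = Ordinal Hm by apply: val_inj.
  have := Gpos _ Gc (Ordinal Hm); lra.
have := Hc _ Hk'; lra.
Qed.
Local Open Scope ring_scope.
Lemma approx_le (R : realType) (x r K : R) : (0 <= K)%R ->
  (forall d : R, (0 < d)%R -> (d < 2^-1)%R -> (x - d * K <= r)%R) -> (x <= r)%R.
Proof.
move=> K0 H; apply/ler_addgt0Pr => e e0.
pose d := Num.min (4^-1) (e / (K + 1)).
have d0 : (0 < d)%R by rewrite lt_min; apply/andP; split; [lra| apply: divr_gt0; lra].
have d2 : (d < 2^-1)%R by apply: (@le_lt_trans _ _ (4^-1)); [rewrite ge_min lexx|lra].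
have dK : (d * K <= e)%R.
  have : (d <= e / (K + 1))%R by rewrite ge_min lexx orbT.
  rewrite ler_pdivlMr; last lra.
  move=> h; nra.
have := H d d0 d2; lra.
Qed.

Lemma key_ineq (R : realType) (n : nat) (G : set 'rV[R]_n) (c a t : 'rV[R]_n) (r : R) :
  convex_set_of G -> G `<=` nonneg_orthant n ->
  (forall a b : 'rV[R]_n, G a -> (forall k, (0 < b ord0 k < a ord0 k)%R) -> G b) ->
  G c -> (forall k, (0 < c ord0 k)%R) -> G a ->
  supfun G t = r%:E ->
  (dotR a (\row_k Num.max (t ord0 k) 0) <= r)%R.
Proof.
move=> Gconv Gpos Glow Gc c0 Ga hr.
pose K := (\sum_(k < n) 2 * (a ord0 k + c ord0 k) * `|t ord0 k|)%R.
apply: (@approx_le _ _ _ K).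
  apply: sumr_ge0 => k _; have := Gpos _ Ga k; have := c0 k.
  have := normr_ge0 (t ord0 k); move=> *; apply: mulr_ge0 => //; lra.
move=> d d0 d2.
pose ad := ((1 - d) *: a + (1 - (1 - d)) *: c)%R.
have Gad : G ad by apply: Gconv => //; apply/andP; split; lra.
have adpos : forall k, (0 < ad ord0 k)%R.
  move=> k; rewrite !mxE; have := Gpos _ Ga k; have := c0 k; move=> *; nra.
pose b : 'rV[R]_n := \row_k ((if (0 <= t ord0 k)%R then 1 - d else d) * ad ord0 k)%R.
have Gb : G b.
  apply: (Glow _ _ Gad) => k; rewrite mxE; have := adpos k.
  case: ifP => _ h; apply/andP; split; nra.
have : ((dotR b t)%:E <= r%:E)%E.
  by rewrite -hr; apply: ereal_sup_ubound; exists b.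
rewrite lee_fin; apply: le_trans.
rewrite /dotR /K mulr_sumr -sumrB; apply: ler_sum => k _.
rewrite !mxE.
have ak := Gpos _ Ga k; have ck := c0 k.
case: (lerP 0 (t ord0 k)) => ht.
  rewrite (ger0_norm ht).
  have h1 : (0 <= a ord0 k * t ord0 k)%R by nra.
  have h2 : (0 <= c ord0 k * t ord0 k)%R by nra.
  have h3 : (0 <= d * d * (a ord0 k * t ord0 k))%R by apply: mulr_ge0 => //; nra.
  have h4 : (0 <= d * (3 - d) * (c ord0 k * t ord0 k))%R by apply: mulr_ge0 => //; nra.
  nra.
rewrite (ltr0_norm ht) mulr0.
have h1 : (0 <= - (a ord0 k * t ord0 k))%R by nra.
have h2 : (0 <= - (c ord0 k * t ord0 k))%R by nra.
have h3 : (0 <= d * (1 + d) * - (a ord0 k * t ord0 k))%R by apply: mulr_ge0 => //; nra.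
have h4 : (0 <= d * (2 - d) * - (c ord0 k * t ord0 k))%R by apply: mulr_ge0 => //; nra.
nra.
Qed.
Local Open Scope ereal_scope.
Theorem lemma6p7 (R : realType) (n : nat) (Psi : Cn R n -> \bar R) :
  LPSHstar Psi -> indicator Psi ->
  (exists G : set 'rV[R]_n, lower_set G /\
     forall t, maxe (psi_of Psi t) 0 = supfun G t) ->
  ereal_inf [set maxe (psi_of Psi t) 0 | t in H1 n] =
  ereal_inf [set maxe (psi_of Psi t) 0 | t in Sigma1 n].
Proof.
move=> [[Pfin _ _] _ Pgrow] _ [G [[_ Gconv Gpos Glow] hG]].
have Gne : exists a, G a.
  apply: contrapT => nG.
  have := @maxe_real _ _ (Pfin (fun k => toC (expR (@const_mx R 1 n 0%R ord0 k)))).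
  move=> [r [r0 hr]].
  have : supfun G 0 <= -oo.
    apply: ge_ereal_sup => y [a Ga _]; exfalso; apply: nG; by exists a.
  by rewrite -hG /psi_of hr.
have [c [Gc c0]] := @pos_pt _ _ _ Gconv Gpos Gne (@coord_ex _ _ _ _ Pgrow hG).
apply/eqP; rewrite eq_le; apply/andP; split.
  by apply: le_ereal_inf => y [t [Ht1 Ht2] <-]; exists t.
apply/ereal_infP => y [t Ht <-].
have [r [r0 hr]] := @maxe_real _ _ (Pfin (fun k => toC (expR (t ord0 k)))).
rewrite /psi_of in hG.
rewrite /psi_of hr.
pose tp : 'rV[R]_n := \row_k Num.max (t ord0 k) 0%R.
pose S := (\sum_(k < n) tp ord0 k)%R.
have S1 : (1 <= S)%R.
  rewrite -Ht /S; apply: ler_sum => k _; rewrite mxE le_max lexx //.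
have S0 : (0 < S)%R by apply: (lt_le_trans ltr01).
pose t' : 'rV[R]_n := (S^-1 *: tp)%R.
have St' : Sigma1 n t'.
  split.
    by move=> k; rewrite !mxE; apply: mulr_ge0; [rewrite invr_ge0 ltW | rewrite le_max lexx orbT].
  rewrite /H1 /=.
  under eq_bigr do rewrite mxE.
  by rewrite -mulr_sumr mulVf // gt_eqF.
apply: (@le_trans _ _ (maxe (psi_of Psi t') 0)).
  by apply: ereal_inf_lbound; exists t'.
rewrite /psi_of hG; apply: ge_ereal_sup => z [a Ga <-]; rewrite lee_fin.
have := @key_ineq _ _ _ _ _ _ _ Gconv Gpos Glow Gc c0 Ga (etrans (esym (hG t)) hr).
rewrite -/tp.
have -> : dotR a t' = (S^-1 * dotR a tp)%R.
  by rewrite /dotR mulr_sumr; apply: eq_bigr => k _; rewrite mxE mulrCA.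
move=> H.
have Si1 : (S^-1 <= 1)%R by rewrite invf_le1.
have Si0 : (0 < S^-1)%R by rewrite invr_gt0.
case: (lerP 0 (dotR a tp)) => hd.
  by apply: le_trans H; apply: ler_piMl.
by apply: le_trans r0; rewrite pmulr_rle0 // ltW.
Qed.
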